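(* The third order mock theta function $\psi_3(q)=\sum_{n\ge0}\frac{q^{n^2}}{(q;q^2)_n}$ is the generating function $\sum_\pi q^{|\pi|}$ over partitions $\pi$ with $n$ copies of $n$ (including the empty one) in which, with parts in ascending lexicographic order, the weighted difference between each part and the preceding one is exactly $0$, and the smallest part is of the form $j_j$.
   Context: $M=\{m_i: 1\le i\le m\}$; a partition with $n$ copies of $n$ is a finite multiset of elements of $M$, $|\pi|$ the sum of values. Lexicographic order: $m_i>n_j$ iff $m>n$, or $m=n$ and $i>j$. Weighted difference $((m_i-n_j))=m-n-i-j$. $(a;q)_n=\prod_{j=0}^{n-1}(1-aq^j)$. *)

(* Defs.v *)
From mathcomp Require Import all_boot all_order all_algebra.
Set Implicit Arguments. Unset Strict Implicit. Unset Printing Implicit Defensive.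
Import GRing.Theory Num.Theory.

(* Truncation of the formal power series 1/(1 - q^k) = sum_{i>=0} q^(k i)
   to the terms of index i <= N (enough to determine all coefficients of
   q^0 .. q^N when k >= 1). *)
Definition geom_trunc (k N : nat) : {poly int} :=
  (\sum_(i < N.+1) 'X^(k * i))%R.

(* Coefficient of q^N in  psi_3(q) = sum_{n>=0} q^(n^2) / (q;q^2)_n,
   where (q;q^2)_n = prod_{j=0}^{n-1} (1 - q^(2j+1)).
   Terms with n > N contribute only to powers q^(n^2) with n^2 > N. *)
Definition psi3_coef (N : nat) : int :=
  ((\sum_(n < N.+1) 'X^(n ^ 2) * \prod_(j < n) geom_trunc (2 * j + 1) N)
     : {poly int})`_N.

(* A part m_i (1 <= i <= m) is represented by the pair (m, i). *)
Definition part := (nat * nat)%type.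

Definition is_part (p : part) : bool := (0 < p.2 <= p.1).

Definition lex_le (a b : part) : bool :=
  (a.1 < b.1) || ((a.1 == b.1) && (a.2 <= b.2)).

Definition wdiff (a b : part) : int :=
  (Posz a.1 - Posz b.1 - Posz a.2 - Posz b.2)%R.

(* A partition with n copies of n, i.e. a finite multiset of parts,
   is represented canonically by the list of its parts in ascending
   lexicographic order. *)
Definition is_nncopies_partition (s : seq part) : bool :=
  all is_part s && sorted lex_le s.

Definition weight (s : seq part) : nat := sumn (map fst s).

Definition consecutive_wdiff0 (s : seq part) : bool :=
  sorted (fun a b => wdiff b a == 0%R) s.

Definition smallest_diag (s : seq part) : bool :=
  if s is x :: _ then x.1 == x.2 else true.

Definition psi3_partition (N : nat) (s : seq part) : bool :=
  [&& is_nncopies_partition s, weight s == N,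
      consecutive_wdiff0 s & smallest_diag s].

(* Main.v *)
Require Import Defs.
From mathcomp Require Import all_boot all_order all_algebra.
From mathcomp Require Import zify.
Import GRing.Theory.

Fixpoint bld (m i : nat) (r : seq nat) : seq part :=
  if r is j :: r' then (m + i + j, j) :: bld (m + i + j) j r' else [::].
Definition build (s : seq nat) : seq part :=
  if s is i :: r then (i, i) :: bld i i r else [::].

Lemma snd_bld m i r : map snd (bld m i r) = r.
Proof. by elim: r m i => //= j r IH m i; rewrite IH. Qed.

Lemma snd_build s : map snd (build s) = s.
Proof. by case: s => //= i r; rewrite snd_bld. Qed.

Lemma wdiff0E (x y : part) : (wdiff y x == 0%R) = (y.1 == x.1 + x.2 + y.2).
Proof.
rewrite /wdiff; apply/eqP/eqP => H; lia.
Qed.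

Lemma bld_char r x : sorted (fun a b => wdiff b a == 0%R) (x :: r) ->
  r = bld x.1 x.2 (map snd r).
Proof.
elim: r x => //= y r IH x /andP [H1 H2].
rewrite wdiff0E in H1; move/eqP: H1 => H1.
rewrite -H1 -(IH y H2). by case: y {H2} H1.
Qed.

Lemma build_char s : consecutive_wdiff0 s -> smallest_diag s -> s = build (map snd s).
Proof.
case: s => //= x r H /eqP Hd. rewrite /build -Hd.
case: x Hd H => a b /= -> H. by rewrite -(bld_char _ _ H).
Qed.

Lemma bld_props m i r : 0 < i -> all (fun j => 0 < j) r ->
  [/\ all is_part (bld m i r), path lex_le (m, i) (bld m i r)
    & path (fun a b => wdiff b a == 0%R) (m, i) (bld m i r)].
Proof.
elim: r m i => //= j r IH m i Hi /andP [Hj Hr].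
have [A B C] := IH (m + i + j) j Hj Hr.
split.
- rewrite A andbT /is_part /=. apply/andP; split => //. lia.
- rewrite B andbT /lex_le /=. apply/orP; left. lia.
- rewrite C andbT wdiff0E /=. done.
Qed.

Lemma build_props s : all (fun j => 0 < j) s ->
  [/\ is_nncopies_partition (build s), consecutive_wdiff0 (build s)
    & smallest_diag (build s)].
Proof.
case: s => [|i r] //= /andP [Hi Hr].
have [A B C] := bld_props i i r Hi Hr.
rewrite /is_nncopies_partition /consecutive_wdiff0 /= A B C /is_part /=.
split => //. by rewrite Hi leqnn.
Qed.

Fixpoint wt (o : nat) (t : seq nat) : nat :=
  if t is x :: t' then (2 * o + 1) * x + wt o.+1 t' else 0.

Lemma wt_rcons o t x : wt o (rcons t x) = wt o t + (2 * (o + size t) + 1) * x.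
Proof.
elim: t o => [|y t IH] o /=; first by lia.
rewrite IH; lia.
Qed.

Lemma weight_bld m i r : weight (bld m i r) = size r * (m + i) + wt 0 (rev r).
Proof.
elim: r m i => [|j r IH] m i //=.
rewrite /weight /= -/(weight _) IH rev_cons wt_rcons size_rev /=. lia.
Qed.

Lemma weight_build s : weight (build s) = wt 0 (rev s).
Proof.
case: s => [|i r] //=.
rewrite /weight /= -/(weight _) weight_bld rev_cons wt_rcons size_rev. lia.
Qed.

Definition D (N : nat) := iota 1 N.+1.
Fixpoint tup (N n : nat) : seq (seq nat) :=
  if n is n'.+1 then [seq x :: t | x <- D N, t <- tup N n'] else [:: [::]].
Definition T (N : nat) := [seq t | n <- iota 0 N.+1, t <- tup N n].

Lemma mem_tup N n t : (t \in tup N n) = (size t == n) && all (fun x => x \in D N) t.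
Proof.
elim: n t => [|n IH] t.
  by case: t => [|x t]; rewrite inE.
apply/allpairsP/idP.
- move=> [[a b] /= [Ha Hb ->]] /=. by move: Hb; rewrite eqSS Ha IH => /andP [-> ->].
- case: t => [|x t] //= /andP [Hs /andP [Hx Ht]]. exists (x, t) => /=; split => //.
  by rewrite IH -eqSS Hs.
Qed.

Lemma uniq_tup N n : uniq (tup N n).
Proof.
elim: n => [//|n IH]. apply: allpairs_uniq => //; first exact: iota_uniq.
by move=> [a b] [c d] _ _ /= [-> ->].
Qed.

Lemma uniq_T N : uniq (T N).
Proof.
apply: allpairs_uniq_dep; first exact: iota_uniq.
  by move=> n _; exact: uniq_tup.
move=> [a b] [c d] /allpairsPdep [x [y [_ Hy [-> ->]]]]
  /allpairsPdep [x' [y' [_ Hy' [-> ->]]]] /= E.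
move: Hy Hy'; rewrite E !mem_tup => /andP [/eqP <- _] /andP [/eqP <- _].
by [].
Qed.

Lemma mem_T N t : (t \in T N) = (size t <= N) && all (fun x => x \in D N) t.
Proof.
apply/allpairsPdep/idP.
- move=> [n [y [Hn Hy ->]]]. move: Hy; rewrite mem_tup => /andP [/eqP Hs ->].
  rewrite mem_iota in Hn. rewrite andbT Hs. lia.
- move=> /andP [Hs Ha]. exists (size t), t; split => //.
  + rewrite mem_iota. lia.
  + by rewrite mem_tup eqxx.
Qed.

Local Open Scope ring_scope.

Lemma geomE k N : 'X^k * geom_trunc k N = \sum_(d <- D N) ('X^(k * d) : {poly int}).
Proof.
rewrite /geom_trunc mulr_sumr /D -[iota 1 N.+1]/(iota (1 + 0) N.+1) iotaDl big_map.
have -> : iota 0 N.+1 = index_iota 0 N.+1 by rewrite /index_iota subn0.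
rewrite big_mkord.
apply: eq_bigr => i _. by rewrite -exprD add1n mulnS.
Qed.

Lemma prod_geom N n : 'X^(n ^ 2) * \prod_(j < n) geom_trunc (2 * j + 1) N =
  \prod_(j < n) \sum_(d <- D N) ('X^((2 * j + 1) * d) : {poly int}).
Proof.
elim: n => [|n IH]; first by rewrite !big_ord0 mulr1.
rewrite !big_ord_recr /= -IH -geomE.
have -> : (n.+1 ^ 2 = n ^ 2 + (2 * n + 1))%N by lia.
rewrite exprD. rewrite -!mulrA. congr (_ * _). by rewrite mulrCA.
Qed.

Lemma prod_tup N o n : \prod_(j < n) \sum_(d <- D N) ('X^((2 * (o + j) + 1) * d) : {poly int})
  = \sum_(t <- tup N n) 'X^(wt o t).
Proof.
elim: n o => [|n IH] o; first by rewrite big_ord0 big_seq1.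
rewrite big_ord_recl big_allpairs_dep.
have E : forall i : 'I_n, (o + @lift n.+1 ord0 i = o.+1 + i)%N by move=> i; rewrite /= /bump /=; lia.
rewrite (eq_bigr (fun i : 'I_n => \sum_(d <- D N) ('X^((2 * (o.+1 + i) + 1) * d) : {poly int}))); last first.
  by move=> i _; rewrite E.
rewrite IH addn0 big_distrl /=. apply: eq_bigr => x _.
rewrite big_distrr /=. apply: eq_bigr => t _. by rewrite exprD.
Qed.

Lemma coef_count N : psi3_coef N = Posz (count (fun t => wt 0 t == N) (T N)).
Proof.
rewrite /psi3_coef.
under eq_bigr do rewrite prod_geom.
under eq_bigr => n _ do under eq_bigr => j _ do rewrite -[(2 * j)%N]/(2 * (0 + j))%N.
under eq_bigr do rewrite prod_tup.
rewrite /T -sum1_count [in RHS]big_mkcond big_allpairs_dep -natz natr_sum.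
have -> : iota 0 N.+1 = index_iota 0 N.+1 by rewrite /index_iota subn0.
rewrite big_mkord coef_sum.
apply: eq_bigr => n _. rewrite coef_sum natr_sum. apply: eq_bigr => t _.
by rewrite coefXn eq_sym; case: eqP.
Qed.

Local Close Scope ring_scope.

Lemma size_le_weight s : all is_part s -> size s <= weight s.
Proof.
elim: s => //= x s IH /andP [Hx Hs]. rewrite /weight /= -/(weight s).
move: Hx (IH Hs); rewrite /is_part; lia.
Qed.

Lemma snd_le_weight s x : all is_part s -> x \in s -> 0 < x.2 <= weight s.
Proof.
elim: s => //= y s IH /andP [Hy Hs]. rewrite inE /weight /= -/(weight s).
case/orP => [/eqP -> | Hx].
- move: Hy; rewrite /is_part; lia.
- move: (IH Hs Hx); lia.
Qed.

Theorem theorem27 :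
  forall N : nat,
  exists l : seq (seq part),
    [/\ uniq l,
        (forall s : seq part, (s \in l) = psi3_partition N s) &
        Posz (size l) = psi3_coef N].
Proof.
move=> N. exists [seq build (rev t) | t <- T N & wt 0 t == N]. split.
- rewrite map_inj_uniq ?filter_uniq ?uniq_T //.
  move=> a b E. have := congr1 (map snd) E; rewrite !snd_build.
  by move/(congr1 rev); rewrite !revK.
- move=> s. apply/mapP/idP.
  + move=> [t]; rewrite mem_filter => /andP [/eqP Hw Ht] ->.
    move: Ht; rewrite mem_T => /andP [_ Ha].
    have Hpos : all (fun j => 0 < j) (rev t).
      rewrite all_rev; apply: sub_all Ha => x; rewrite mem_iota; lia.
    have [A B C] := build_props _ Hpos.
    by rewrite /psi3_partition A B C weight_build revK Hw eqxx.
  + rewrite /psi3_partition => /and4P [Hn /eqP Hw Hc Hd].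
    have Hs := build_char _ Hc Hd.
    move: Hn; rewrite /is_nncopies_partition => /andP [Hp _].
    exists (rev (map snd s)); last by rewrite revK -Hs.
    rewrite mem_filter mem_T -weight_build -Hs Hw eqxx /= size_rev size_map.
    rewrite -Hw size_le_weight //= all_rev all_map.
    apply/allP => x Hx /=. rewrite mem_iota. move: (snd_le_weight _ _ Hp Hx). by move=> /andP [-> H]; rewrite add1n ltnS leqW.
- by rewrite size_map size_filter coef_count.
Qed.
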